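(* Let $l$ be a linear form in the variables $Y\cup Z$ over a field $\mathbb{F}$ and $t$ a positive integer. Then $\mathrm{maxrank}(M_{l^t})\le t+1$.
   Context: $Y$ and $Z$ are disjoint finite sets of variables (arising from an arbitrary partition of a variable set into $Y$ and $Z$). For $g\in\mathbb{F}[Y,Z]$, the polynomial coefficient matrix $M_g$ has rows indexed by monic multilinear monomials $p$ in $Y$ and columns by monic multilinear monomials $q$ in $Z$, with $M_g(p,q)=G$ iff $g=pq\,G+Q$ uniquely with $G$ containing only variables present in $p,q$ and $Q$ having no monomial divisible by $pq$ that contains only variables present in $p,q$. $\mathrm{maxrank}(M_g)=\max_{S:Y\cup Z\to\mathbb{F}}\mathrm{rank}(M_g|_S)$, where $M_g|_S$ evaluates entries at $S$. *)

(* Defs.v *)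
From HB Require Import structures.
From mathcomp Require Import all_boot all_order all_algebra.
From mathcomp Require Import mpoly.
Set Implicit Arguments. Unset Strict Implicit. Unset Printing Implicit Defensive.
Import GRing.Theory.
Local Open Scope ring_scope.

(* Variables are 'I_n; the partition is Y and Z := ~: Y.
   A monic multilinear monomial in Y (resp. Z) is identified with its set of
   variables A \subset Y (resp. B \subset ~: Y), i.e. an element of powerset Y. *)

(* The entry M_g(p,q), for p = prod_{i in A} x_i, q = prod_{j in B} x_j:
   the unique G with only variables in A :|: B such that g = p q G + Q and no
   monomial of Q is divisible by pq while using only variables of A :|: B. *)
Definition coef_entry (F : fieldType) (n : nat) (g : {mpoly F[n]})
    (A B : {set 'I_n}) : {mpoly F[n]} :=
  \sum_(m <- msupp g | [set i | (m i != 0)%N] == A :|: B)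
     g@_m *: \prod_(i < n) 'X_i ^+ (m i).-1.

Definition coef_matrix (F : fieldType) (n : nat) (Y : {set 'I_n})
    (g : {mpoly F[n]}) :
    'M[{mpoly F[n]}]_(#|powerset Y|, #|powerset (~: Y)|) :=
  \matrix_(i, j) coef_entry g (enum_val i) (enum_val j).

Definition coef_matrix_eval (F : fieldType) (n : nat) (Y : {set 'I_n})
    (g : {mpoly F[n]}) (S : 'I_n -> F) :
    'M[F]_(#|powerset Y|, #|powerset (~: Y)|) :=
  map_mx (fun G : {mpoly F[n]} => G.@[S]) (coef_matrix Y g).

Definition linear_form (F : fieldType) (n : nat) (c : 'I_n -> F) : {mpoly F[n]} :=
  \sum_(i < n) c i *: 'X_i.

(* Main.v *)
Require Import Defs.
From HB Require Import structures.
From mathcomp Require Import all_boot all_order all_algebra.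
From mathcomp Require Import mpoly.
Local Open Scope ring_scope.
Import GRing.Theory.

Section Aux.
Context {F : fieldType} {n : nat}.

Definition phi (U : {set 'I_n}) (m : 'X_{1..n}) : {mpoly F[n]} :=
  if [set i | (m i != 0)%N] == U then \prod_(i < n) 'X_i ^+ (m i).-1 else 0.

Definition Phi (U : {set 'I_n}) (g : {mpoly F[n]}) : {mpoly F[n]} :=
  \sum_(m <- msupp g) g@_m *: phi U m.

Lemma PhiE U g (s : seq 'X_{1..n}) : uniq s -> {subset msupp g <= s} ->
  Phi U g = \sum_(m <- s) g@_m *: phi U m.
Proof.
move=> us sub.
rewrite [RHS](bigID (mem (msupp g))) /= [X in _ + X]big1 ?addr0; last first.
  by move=> m /memN_msupp_eq0 ->; rewrite scale0r.
rewrite -big_filter; apply: perm_big; apply: uniq_perm.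
- exact: msupp_uniq.
- exact: filter_uniq.
- move=> m; rewrite mem_filter; case: (boolP (m \in msupp g)) => //= /sub ->.
  by [].
Qed.

Lemma PhiD U p q : Phi U (p + q) = Phi U p + Phi U q.
Proof.
set s := undup (msupp p ++ msupp q ++ msupp (p + q)).
have us : uniq s by exact: undup_uniq.
have h1 : {subset msupp p <= s} by move=> m mp; rewrite mem_undup !mem_cat mp ?orbT.
have h2 : {subset msupp q <= s} by move=> m mp; rewrite mem_undup !mem_cat mp ?orbT.
have h3 : {subset msupp (p + q) <= s} by move=> m mp; rewrite mem_undup !mem_cat mp ?orbT.
rewrite (PhiE U _ _ us h1) (PhiE U _ _ us h2) (PhiE U _ _ us h3) -big_split /=.
by apply: eq_bigr => m _; rewrite mcoeffD scalerDl.
Qed.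

Lemma Phi0 U : Phi U 0 = 0.
Proof. by rewrite /Phi msupp0 big_nil. Qed.

Lemma PhiZ U c p : Phi U (c *: p) = c *: Phi U p.
Proof.
set s := undup (msupp p ++ msupp (c *: p)).
have us : uniq s by exact: undup_uniq.
have h1 : {subset msupp p <= s} by move=> m mp; rewrite mem_undup !mem_cat mp ?orbT.
have h2 : {subset msupp (c *: p) <= s} by move=> m mp; rewrite mem_undup !mem_cat mp ?orbT.
rewrite (PhiE U _ _ us h1) (PhiE U _ _ us h2) scaler_sumr.
by apply: eq_bigr => m _; rewrite mcoeffZ scalerA.
Qed.

Lemma PhiMn U p k : Phi U (p *+ k) = Phi U p *+ k.
Proof. by elim: k => [|k IH]; rewrite ?mulr0n ?Phi0 // !mulrS PhiD IH. Qed.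

Lemma PhiX U m : Phi U 'X_[m] = phi U m.
Proof. by rewrite /Phi msuppX big_seq1 mcoeffX eqxx scale1r. Qed.

Definition supp_in (P : {set 'I_n}) (p : {mpoly F[n]}) :=
  forall (m : 'X_{1..n}) i, (m i != 0)%N -> i \notin P -> p@_m = 0.

Lemma supp_in_msupp P p m i : supp_in P p -> m \in msupp p -> (m i != 0)%N -> i \in P.
Proof.
move=> sp mp mi; apply/negPn/negP => iP.
by move: mp; rewrite mcoeff_msupp (sp m i mi iP) eqxx.
Qed.

Lemma supp_in1 P : supp_in P 1.
Proof.
move=> m i mi iP; rewrite mcoeff1; case: eqP => // m0.
by move: mi; rewrite m0 mnm0E.
Qed.

Lemma supp_inM P p q : supp_in P p -> supp_in P q -> supp_in P (p * q).
Proof.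
move=> sp sq m i mi iP; rewrite mcoeffM big1 // => k /eqP mk.
have : ((k.1 i + k.2 i) != 0)%N by rewrite -mnmDE -mk.
move=> {mi} mi; move: mi.
case: (boolP (k.1 i != 0)%N) => [h _|]; first by rewrite (sp _ _ h iP) mul0r.
rewrite negbK => /eqP -> /= h; by rewrite (sq _ _ h iP) mulr0.
Qed.

Lemma supp_inX P p k : supp_in P p -> supp_in P (p ^+ k).
Proof.
move=> sp; elim: k => [|k IH]; first by rewrite expr0; exact: supp_in1.
by rewrite exprS; apply: supp_inM.
Qed.

Lemma supp_in_lin P (c : 'I_n -> F) :
  supp_in P (\sum_(i < n | i \in P) c i *: 'X_i).
Proof.
move=> m j mj jP; rewrite raddf_sum /= big1 // => i iP.
rewrite mcoeffZ mcoeffX; case: eqP; last by rewrite mulr0.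
move=> e; have ij : i = j.
  by move: mj; rewrite -e mnm1E; case: (i =P j).
by move: jP; rewrite -ij iP.
Qed.

Lemma phiM (Y A B : {set 'I_n}) (m m' : 'X_{1..n}) :
  A \subset Y -> B \subset ~: Y ->
  (forall i, (m i != 0)%N -> i \in Y) ->
  (forall i, (m' i != 0)%N -> i \in ~: Y) ->
  phi (A :|: B) (m + m') = phi A m * phi B m'.
Proof.
move=> AY BY mY m'Y.
have eqS : ([set i | ((m + m')%MM i != 0)%N] == A :|: B) =
           ([set i | (m i != 0)%N] == A) && ([set i | (m' i != 0)%N] == B).
  apply/idP/idP.
  - move/eqP/setP => h; apply/andP; split; apply/eqP/setP => x; move: (h x);
      rewrite !inE mnmDE addn_eq0 negb_and.
    + case: (boolP (x \in Y)) => xY.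
      * have -> : (m' x == 0)%N.
          by apply/negPn/negP => /m'Y; rewrite inE xY.
        have -> : (x \in B) = false.
          by apply/negP => /(subsetP BY); rewrite inE xY.
        by rewrite /= !orbF.
      * have -> : (m x == 0)%N by apply/negPn/negP => /mY; rewrite (negbTE xY).
        have -> : (x \in A) = false by apply/negP => /(subsetP AY); rewrite (negbTE xY).
        move=> _ /=; by [].
    + case: (boolP (x \in Y)) => xY.
      * have -> : (m' x == 0)%N.
          by apply/negPn/negP => /m'Y; rewrite inE xY.
        by have -> : (x \in B) = false by apply/negP => /(subsetP BY); rewrite inE xY.
      * have -> : (m x == 0)%N by apply/negPn/negP => /mY; rewrite (negbTE xY).
        have -> : (x \in A) = false by apply/negP => /(subsetP AY); rewrite (negbTE xY).
        by [].
  - case/andP => /eqP <- /eqP <-; apply/eqP/setP => x.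
    by rewrite !inE mnmDE addn_eq0 negb_and.
rewrite /phi eqS.
case: ([set i | (m i != 0)%N] == A); last by rewrite mul0r.
case: ([set i | (m' i != 0)%N] == B); last by rewrite mulr0.
rewrite -big_split /=; apply: eq_bigr => i _; rewrite mnmDE.
case: (boolP (m i == 0)%N) => [/eqP -> | mi].
  by rewrite expr0 mul1r.
have -> : m' i = 0%N.
  apply/eqP/negPn/negP => /m'Y; by rewrite inE (mY _ mi).
by rewrite expr0 mulr1 addn0.
Qed.

Lemma PhiM (Y A B : {set 'I_n}) p q :
  A \subset Y -> B \subset ~: Y -> supp_in Y p -> supp_in (~: Y) q ->
  Phi (A :|: B) (p * q) = Phi A p * Phi B q.
Proof.
move=> AY BY sp sq.
rewrite {1}[p]mpolyE {1}[q]mpolyE mulr_suml.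
rewrite (big_morph (Phi (A :|: B)) (PhiD _) (Phi0 _)).
rewrite [Phi A p]/Phi [Phi B q]/Phi mulr_suml; apply: eq_big_seq => m mp.
rewrite mulr_sumr (big_morph (Phi (A :|: B)) (PhiD _) (Phi0 _)) mulr_sumr.
apply: eq_big_seq => m' m'p.
rewrite -scalerAl -scalerAr scalerA -mpolyXD PhiZ PhiX.
rewrite -scalerAl -scalerAr scalerA (phiM _ _ _ _ _ AY BY) //.
- by move=> i; exact: (supp_in_msupp _ _ _ _ sp mp).
- by move=> i; exact: (supp_in_msupp _ _ _ _ sq m'p).
Qed.

End Aux.

Theorem lemma5 (F : fieldType) (n : nat) (Y : {set 'I_n}) (c : 'I_n -> F)
    (t : nat) (ht : (0 < t)%N) :
  forall S : 'I_n -> F,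
    (\rank (coef_matrix_eval Y ((linear_form c) ^+ t) S) <= t.+1)%N.
Proof.
move=> S.
pose lY := \sum_(i < n | i \in Y) c i *: 'X_i : {mpoly F[n]}.
pose lZ := \sum_(i < n | i \in ~: Y) c i *: 'X_i : {mpoly F[n]}.
have hl : linear_form c = lY + lZ.
  rewrite /linear_form (bigID (mem Y)) /=; congr (_ + _).
  by apply: eq_bigl => i; rewrite inE.
pose G := \matrix_(i < #|powerset Y|, k < t.+1)
   (meval S (Phi (enum_val i) (lY ^+ (t - k))) *+ 'C(t, k)).
pose H := \matrix_(k < t.+1, j < #|powerset (~: Y)|)
   (meval S (Phi (enum_val j) (lZ ^+ k))).
have -> : coef_matrix_eval Y (linear_form c ^+ t) S = G *m H.
  apply/matrixP => i j; rewrite !mxE.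
  have AY : enum_val i \subset Y.
    by have := enum_valP i; rewrite powersetE.
  have BY : enum_val j \subset ~: Y.
    by have := enum_valP j; rewrite powersetE.
  have -> : coef_entry (linear_form c ^+ t) (enum_val i) (enum_val j) =
            Phi (enum_val i :|: enum_val j) (linear_form c ^+ t).
    rewrite /coef_entry /Phi big_mkcond /=; apply: eq_bigr => m _.
    by rewrite /phi; case: ifP => _; rewrite ?scaler0.
  rewrite hl exprDn (big_morph (Phi _) (PhiD _) (Phi0 _)).
  rewrite (big_morph (meval S) (mevalD S) (meval0 S)).
  apply: eq_bigr => k _; rewrite !mxE PhiMn (PhiM _ _ _ _ _ AY BY).
  - by rewrite mevalMn mevalM mulrnAl.
  - by apply: supp_inX; apply: supp_in_lin.
  - by apply: supp_inX; apply: supp_in_lin.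
apply: leq_trans (mxrankM_maxl _ _) _.
exact: rank_leq_col.
Qed.
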